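(* For a compact Hausdorff space $(X,\tau)$ the following are equivalent: (1) $X$ has the property $\textsf{S}_1(\mathcal{O},\mathcal{O})$; (2) TWO has a winning strategy in the game ${\sf G}_1(\mathcal{O},\mathcal{O})$.
   Context: $\mathcal{O}$: open covers of $X$. $\textsf{S}_1(\mathcal{O},\mathcal{O})$: for every sequence $(\mathcal{U}_n)$ of open covers there are $U_n\in\mathcal{U}_n$ with $\{U_n:n\in\mathbb{N}\}$ covering $X$. Game ${\sf G}_1(\mathcal{O},\mathcal{O})$: in inning $n\in\mathbb{N}$ ONE chooses an open cover $O_n$ of $X$, TWO responds with $T_n\in O_n$; TWO wins if $\{T_n:n\in\mathbb{N}\}$ covers $X$, otherwise ONE wins. *)

(* Defs.v *)
From HB Require Import structures.
From mathcomp Require Import all_boot all_order.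
From mathcomp Require Import all_classical all_reals topology.
Set Implicit Arguments. Unset Strict Implicit. Unset Printing Implicit Defensive.
Local Open Scope classical_set_scope.

Definition open_cover {X : topologicalType} (O : set (set X)) : Prop :=
  (forall U, O U -> open U) /\ (forall x : X, exists2 U, O U & U x).

Definition S1_OO (X : topologicalType) : Prop :=
  forall O : nat -> set (set X), (forall n, open_cover (O n)) ->
  exists U : nat -> set X, (forall n, O n (U n)) /\
    (forall x : X, exists n, U n x).

(* A strategy for TWO in G_1(O,O): given the list of ONE's moves so far
   (O_0, ..., O_n), TWO answers with a set. *)
Definition strategy_TWO (X : topologicalType) := seq (set (set X)) -> set X.

Definition history {X : topologicalType} (O : nat -> set (set X)) (n : nat)
  : seq (set (set X)) := mkseq O n.+1.

Definition winning_TWO (X : topologicalType) (sigma : strategy_TWO X) : Prop :=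
  forall O : nat -> set (set X), (forall n, open_cover (O n)) ->
    (forall n, O n (sigma (history O n))) /\
    (forall x : X, exists n, sigma (history O n) x).

Definition TWO_wins_G1_OO (X : topologicalType) : Prop :=
  exists sigma : strategy_TWO X, winning_TWO sigma.

(* Main.v *)
Require Import Defs.
From mathcomp Require Import all_boot all_order.
From mathcomp Require Import all_classical all_reals topology.
Local Open Scope classical_set_scope.
From Stdlib Require List.
From Stdlib Require Import Classical.

Lemma fin_sub (X : topologicalType) (hcpt : compact [set: X]) (f : X -> set X) :
  (forall x, open (f x)) -> (forall x, f x x) ->
  exists s : seq X, forall y, exists2 x, List.In x s & f x y.
Proof.
move=> fo fx.
pose F := filter_from [set: seq X]
  (fun s0 : seq X => [set s | forall z, List.In z s0 -> List.In z s]).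
have FF : Filter F.
  apply: filter_from_filter; first by exists [::].
  move=> i j _ _; exists (i ++ j) => // s /= H; split => z zi; apply: H;
    apply: List.in_or_app; tauto.
have := (proj1 (compact_near_coveringP [set: X]) hcpt) (seq X) F
  (fun s y => exists2 x, List.In x s & f x y) FF.
case.
  move=> x _.
  exists (f x, [set s | forall z, List.In z [:: x] -> List.In z s]).
    split => /=; last by exists [:: x].
    by apply: open_nbhs_nbhs; split.
  case=> y s [/= fy H]; exists x => //; apply: H; left. done.
move=> s0 _ H; exists s0 => y; exact: (H s0 (fun z h => h) y).
Qed.

Section Game.
Context {X : topologicalType}.

Definition oc (C : set (set X)) : Prop :=
  (forall U, C U -> open U) /\ (forall x : X, exists2 U, C U & U x).

Inductive Wt (S : set X) : Type :=
| Wc : S = setT -> Wt S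
| Ws : forall (g : forall C, oc C -> set X), (forall C h, C (g C h)) ->
    (forall C h, Wt (S `|` g C h)) -> Wt S.
Arguments Wc {S}. Arguments Ws {S}.

Definition pick (C : set (set X)) : set X :=
  match pselect (exists U, C U) with left p => proj1_sig (cid p) | right _ => setT end.

Lemma UT_l (S U : set X) : S = setT -> S `|` U = setT.
Proof. by move=> ->; rewrite setTU. Qed.

Definition step (S : set X) (d : Wt S) (C : set (set X)) : {U : set X & Wt (S `|` U)} :=
  match d with
  | Wc e => existT _ (pick C) (Wc (@UT_l S (pick C) e))
  | Ws g _ k => match pselect (oc C) with
     | left h => existT _ (g C h) (k C h)
     | right _ => existT _ setT (Wc (setUT S)) end
  end.
Arguments step {S}.

Fixpoint stateFrom (n : nat) : forall S, Wt S -> (nat -> set (set X)) -> {S' : set X & Wt S'} :=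
  match n with
  | 0 => fun S d O => existT _ S d
  | n'.+1 => fun S d O => stateFrom n' _ (projT2 (step d (O 0))) (fun i => O i.+1)
  end.
Arguments stateFrom n {S}.

Definition moveFrom n S (d : Wt S) O := projT1 (step (projT2 (stateFrom n d O)) (O n)).
Arguments moveFrom n {S}.

Lemma step_legal S (d : Wt S) C : oc C -> (exists U, C U) -> C (projT1 (step d C)).
Proof.
case: d => [e|g hg k] /= hC hE.
  rewrite /pick; case: pselect => // p; exact: (proj2_sig (cid p)).
by case: pselect => [h|//]; exact: hg.
Qed.

Lemma stateFrom_sub n S (d : Wt S) O x : projT1 (stateFrom n d O) x ->
  S x \/ exists2 i, (i < n)%N & moveFrom i d O x.
Proof.
elim: n S d O => [|n IH] S d O /=; first by left.
case/IH => [[Sx|Ux]|[i lti mi]]; first by left.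
  by right; exists 0%N.
by right; exists i.+1.
Qed.

Lemma moveFrom_ext n S (d : Wt S) O O' : (forall i, (i <= n)%N -> O i = O' i) ->
  moveFrom n d O = moveFrom n d O'.
Proof.
elim: n S d O O' => [|n IH] S d O O' H; first by rewrite /moveFrom /= H.
change (moveFrom n (projT2 (step d (O 0))) (fun i => O i.+1) =
        moveFrom n (projT2 (step d (O' 0))) (fun i => O' i.+1)).
rewrite (H 0%N) //; apply: IH => i hi; exact: H.
Qed.

Lemma eventually S (d : Wt S) : forall O, (forall n, oc (O n)) ->
  exists n, projT1 (stateFrom n d O) = setT.
Proof.
elim: d => [S0 e|S0 g hg k IH] O hO; first by exists 0%N.
have [n Hn] := IH (O 0%N) (hO 0%N) (fun i => O i.+1) (fun i => hO i.+1).
exists n.+1 => /=; move: Hn.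
rewrite /step; case: pselect => [h|]; last by have := hO 0%N.
have -> : h = hO 0%N by exact: Prop_irrelevance.
done.
Qed.


Definition NW (S : set X) := ~ inhabited (Wt S).

Lemma inh_val (A : Type) : inhabited A -> A.
Proof. move=> h; have : exists w : A, True by case: h => w; exists w. by move/cid=> [w _]. Qed.

Lemma NW_step S : NW S -> S <> setT /\ exists C, oc C /\ forall U, C U -> NW (S `|` U).
Proof.
move=> nW; split; first by move=> e; apply: nW; constructor; exact: Wc.
apply: NNPP => hn; apply: nW.
have H : forall C, oc C -> exists U, C U /\ inhabited (Wt (S `|` U)).
  move=> C hC; apply: NNPP => hn2; apply: hn; exists C; split=> // U CU hW.
  by apply: hn2; exists U.
constructor; apply: (Ws (fun C h => proj1_sig (cid (H C h)))).
  by move=> C h; exact: (proj1 (proj2_sig (cid (H C h)))).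
move=> C h; exact: (@inh_val _ (proj2 (proj2_sig (cid (H C h))))).
Qed.

Variable hcpt : compact [set: X].

Lemma tau_ex : {s : set X -> seq X & forall S, NW S ->
  exists u : X -> set X, (forall x, open (u x) /\ NW (S `|` u x)) /\
     (forall y, exists2 x, List.In x (s S) & u x y)}.
Proof.
apply: (@choice (set X) (seq X) (fun S s => NW S ->
  exists u : X -> set X, (forall x, open (u x) /\ NW (S `|` u x)) /\
     (forall y, exists2 x, List.In x (s) & u x y))) => S.
case: (pselect (NW S)) => [nW|nW]; last by exists [::].
have [_ [C [[Co Ccov] CN]]] := NW_step _ nW.
have Ccov2 : forall x, exists U, C U /\ U x by move=> x; case: (Ccov x) => U ? ?; exists U.
have [ux hux] := choice Ccov2.
have [s0 hs0] := @fin_sub X hcpt ux (fun x => Co _ (proj1 (hux x))) (fun x => proj2 (hux x)).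
exists s0 => _; exists ux; split => //.
move=> x; split; [exact: Co (proj1 (hux x))|exact: CN (proj1 (hux x))].
Qed.


Section Reach.
Variables (s : set X -> seq X) (u : set X -> X -> set X).

Fixpoint R (n : nat) (S : set X) : Prop :=
  match n with
  | 0 => S = set0
  | m.+1 => exists S0 x, R m S0 /\ List.In x (s S0) /\ S = S0 `|` u S0 x
  end.

Lemma R_list n : exists L, forall S, R n S -> List.In S L.
Proof.
elim: n => [|n [L HL]]; first by exists [:: set0] => S /= ->; left.
exists (List.flat_map (fun S => List.map (fun x => S `|` u S x) (s S)) L).
move=> S /= [S0 [x [RS0 [xin ->]]]].
apply/List.in_flat_map; exists S0; split; first exact: HL.
by apply/List.in_map_iff; exists x.
Qed.

End Reach.

Lemma open_list (L : seq (set X)) (P : set X -> Prop) (f : set X -> set X) :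
  (forall S, P S -> open (f S)) -> open [set y | forall S, List.In S L -> P S -> f S y].
Proof.
move=> fo; elim: L => [|S0 L IH].
  have -> : [set y | forall S, List.In S [::] -> P S -> f S y] = setT.
    by apply/seteqP; split => // y _ S [].
  exact: openT.
have -> : [set y | forall S, List.In S (S0 :: L) -> P S -> f S y] =
   [set y | P S0 -> f S0 y] `&` [set y | forall S, List.In S L -> P S -> f S y].
  apply/seteqP; split => y /=.
    by move=> H; split => [|S hS]; apply: H; [left|right].
  by case=> H1 H2 S [<-|hS]; [exact: H1|exact: H2].
apply: openI => //.
case: (pselect (P S0)) => hP.
  have -> : [set y | P S0 -> f S0 y] = f S0.
    by apply/seteqP; split => y /=; [apply|move=> ? _].
  exact: fo.
have -> : [set y | P S0 -> f S0 y] = setT.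
  by apply/seteqP; split => y // _ /hP.
exact: openT.
Qed.


Lemma S1_Wt : (forall O : nat -> set (set X), (forall n, oc (O n)) ->
   exists U : nat -> set X, (forall n, O n (U n)) /\ (forall x : X, exists n, U n x)) ->
  inhabited (Wt set0).
Proof.
move=> S1; apply: NNPP => nW0.
have [s hs] := tau_ex.
have [u hu] : exists u : set X -> X -> set X, forall S, NW S ->
    (forall x, open (u S x) /\ NW (S `|` u S x)) /\
    (forall y, exists2 x, List.In x (s S) & u S x y).
  have H : forall S, exists u : X -> set X, NW S ->
    (forall x, open (u x) /\ NW (S `|` u x)) /\
    (forall y, exists2 x, List.In x (s S) & u x y).
    move=> S; case: (pselect (NW S)) => [/hs [u Hu]|nW]; first by exists u.
    by exists (fun _ => set0).
  by have [u hu] := choice H; exists u.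
have RNW n S : R s u n S -> NW S.
  elim: n S => [|n IH] S /=; first by move=> ->.
  by move=> [S0 [x [RS0 [_ ->]]]]; exact: (proj2 ((proj1 (hu S0 (IH S0 RS0))) x)).
pose O n (V : set X) := exists f : set X -> set X,
  (forall S, R s u n S -> exists2 x, List.In x (s S) & f S = u S x) /\
  V = [set y | forall S, R s u n S -> f S y].
have Ooc n : oc (O n).
  split.
    move=> V [f [hf ->]].
    have [L HL] := R_list s u n.
    have -> : [set y | forall S, R s u n S -> f S y] =
       [set y | forall S, List.In S L -> R s u n S -> f S y].
      apply/seteqP; split => y /= H S.
        by move=> _; exact: H.
      by move=> hR; exact: (H S (HL S hR) hR).
    apply: open_list => S hR; have [x _ ->] := hf S hR.
    exact: (proj1 ((proj1 (hu S (RNW n S hR))) x)).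
  move=> y.
  have H : forall S, exists U : set X, R s u n S ->
     exists2 x, List.In x (s S) & U = u S x /\ U y.
    move=> S; case: (pselect (R s u n S)) => hR; last by exists set0.
    have [x xin uxy] := (proj2 (hu S (RNW n S hR))) y.
    by exists (u S x) => _; exists x.
  have [f hf] := choice H.
  exists [set y | forall S, R s u n S -> f S y].
    exists f; split => // S hR; have [x xin [-> _]] := hf S hR; by exists x.
  by move=> S hR; have [x xin [_ ?]] := hf S hR.
have [V [hV cov]] := S1 O Ooc.
have [fs hfs] := choice hV.
pose Sq := fix Sq n := if n is m.+1 then Sq m `|` fs m (Sq m) else set0.
have RSq n : R s u n (Sq n).
  elim: n => [|n IH] //=.
  have [x xin ->] := (proj1 (hfs n)) _ IH.
  by exists (Sq n), x.
have Sqo n : open (Sq n).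
  elim: n => [|n IH] /=; first exact: open0.
  apply: openU => //; have [x xin ->] := (proj1 (hfs n)) _ (RSq n).
  exact: (proj1 ((proj1 (hu _ (RNW n _ (RSq n)))) x)).
have Sqm i j : (i <= j)%N -> Sq i `<=` Sq j.
  elim: j => [|j IH]; first by rewrite leqn0 => /eqP ->.
  rewrite leq_eqVlt => /orP [/eqP -> //|/IH h] y /h ?; by left.
have Sqc y : exists n, Sq n y.
  have [n Vy] := cov y; exists n.+1; right.
  by move: Vy; rewrite (proj2 (hfs n)) => /(_ _ (RSq n)).
have [N hN] := choice Sqc.
have [s0 hs0] := @fin_sub X hcpt (fun y => Sq (N y)) (fun y => Sqo _) hN.
pose m := foldr maxn 0%N (map N s0).
have Nm x : List.In x s0 -> (N x <= m)%N.
  rewrite /m; elim: s0 {hs0 m} => [|z s1 IH] //= [<-|/IH h].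
    exact: leq_maxl.
  exact: (leq_trans h (leq_maxr _ _)).
have : Sq m = setT.
  apply/seteqP; split => // y _; have [x xin Sy] := hs0 y.
  exact: (Sqm _ _ (Nm x xin)).
move=> e; apply: (RNW m _ (RSq m)); constructor; exact: Wc.
Qed.

End Game.
Arguments moveFrom {X} n {S}. Arguments stateFrom {X} n {S}. Arguments step {X S}.

Theorem lemma8p4 (X : topologicalType) (hcpt : compact [set: X])
  (hT2 : hausdorff_space X) :
  S1_OO X <-> TWO_wins_G1_OO X.
Proof.
split; last first.
  by move=> [sigma hs] O hO; exists (fun n => sigma (history O n)); exact: hs.
move=> S1.
have [x0 _] : exists x0 : X, True.
  apply: NNPP => hx.
  have [U [hU _]] := S1 (fun _ => set0) (fun n => conj (fun U (h : set0 U) => match h with end)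
     (fun x => False_ind _ (hx (ex_intro _ x I)))).
  exact: (hU 0%N).
have [d0] := @S1_Wt X hcpt S1.
exists (fun h => moveFrom (size h).-1 d0 (fun i => nth set0 h i)).
move=> O hO.
have E n : moveFrom (size (history O n)).-1 d0 (fun i => nth set0 (history O n) i)
   = moveFrom n d0 O.
  rewrite /history size_mkseq /=; apply: moveFrom_ext => i hi.
  by rewrite nth_mkseq.
split.
  move=> n; rewrite E; apply: step_legal; first exact: hO.
  by have [_ c] := hO n; have [U CU _] := c x0; exists U.
move=> x; have [N eN] := @eventually X set0 d0 O hO.
have : projT1 (stateFrom N d0 O) x by rewrite eN.
case/stateFrom_sub => [//|[i _ hi]]; exists i; by rewrite E.
Qed.
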